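(* Let $\mathbf v\in\mathbb R_{>0}^m$. If $(\mathcal V,\mathcal W)\in\mathcal{DRS}_{\mathbf v}$ is a local $d_P$-minimizer of the joint potential $\mathrm{FP}$ on $\mathcal{DRS}_{\mathbf v}$, then $\mathcal W=\mathcal V^\#$.
   Context: Fix integers $m,d\ge1$ and $\mathbf k=(k_1,\dots,k_m)\in\mathbb N^m$ with each $k_i\le d$. A system is an $m$-tuple $\mathcal V=(V_i)_{i=1}^m$ with $V_i\in L(\mathbb C^d,\mathbb C^{k_i})$. Its analysis operator is $T_{\mathcal V}x=(V_1x,\dots,V_mx)$ and its RS operator is $S_{\mathcal V}=T_{\mathcal V}^*T_{\mathcal V}=\sum_iV_i^*V_i$; $\mathcal V$ is a reconstruction system (RS) if $S_{\mathcal V}$ is invertible, and $\mathcal{RS}(m,\mathbf k,d)$ is the set of RS's. Given weights $\mathbf v\in\mathbb R_{>0}^m$, $\mathcal P_{\mathbf v}(m,\mathbf k,d)$ is the set of RS's with $V_iV_i^*=v_i^2I_{k_i}$ for all $i$. The canonical dual is $\mathcal V^\#=(V_iS_{\mathcal V}^{-1})_i$; $\mathcal W\in\mathcal{RS}$ is a dual of $\mathcal V$ if $\sum_iW_i^*V_i=I_d$, and $\mathcal D(\mathcal V)$ is the set of duals. $\mathcal{DRS}_{\mathbf v}=\{(\mathcal V,\mathcal W)\in\mathcal P_{\mathbf v}\times\mathcal{RS}(m,\mathbf k,d):\mathcal W\in\mathcal D(\mathcal V)\}$, with joint potential $\mathrm{FP}(\mathcal V,\mathcal W)=\operatorname{tr}S_{\mathcal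 V}^2+\operatorname{tr}S_{\mathcal W}^2$. The metric $d_P(\mathcal V,\mathcal W)=(\sum_i\|V_i-W_i\|_2^2)^{1/2}$ uses the Frobenius norm. A pair $(\mathcal V,\mathcal W)\in\mathcal{DRS}_{\mathbf v}$ is a local $d_P$-minimizer of FP if there is $\varepsilon>0$ such that $\mathrm{FP}(\mathcal V',\mathcal W')\ge\mathrm{FP}(\mathcal V,\mathcal W)$ for all $(\mathcal V',\mathcal W')\in\mathcal{DRS}_{\mathbf v}$ with $d_P(\mathcal V,\mathcal V')+d_P(\mathcal W,\mathcal W')<\varepsilon$. *)

(* Defs.v *)
(* Complex scalars: an arbitrary numClosedFieldType C
   (e.g. algC). *)
From HB Require Import structures.
From mathcomp Require Import all_boot all_order all_algebra.
Set Implicit Arguments. Unset Strict Implicit. Unset Printing Implicit Defensive.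
Import Order.TTheory GRing.Theory Num.Theory.
Local Open Scope ring_scope.

Section Systems.
Variables (C : numClosedFieldType) (m d : nat) (k : 'I_m -> nat).

Definition adjmx p q (A : 'M[C]_(p, q)) : 'M[C]_(q, p) := (map_mx Num.conj A)^T.

(* a system V = (V_i), V_i : C^d -> C^(k i) *)
Definition sys := forall i : 'I_m, 'M[C]_(k i, d).

Definition RSop (V : sys) : 'M[C]_d := \sum_(i < m) adjmx (V i) *m V i.

Definition isRS (V : sys) : Prop := RSop V \in unitmx.

Definition inP (v : 'I_m -> C) (V : sys) : Prop :=
  isRS V /\ forall i, V i *m adjmx (V i) = (v i ^+ 2)%:M.

Definition candual (V : sys) : sys := fun i => V i *m invmx (RSop V).

Definition isDual (V W : sys) : Prop :=
  isRS W /\ \sum_(i < m) adjmx (W i) *m V i = 1%:M.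

Definition inDRS (v : 'I_m -> C) (V W : sys) : Prop := inP v V /\ isDual V W.

Definition FP (V W : sys) : C :=
  \tr (RSop V *m RSop V) + \tr (RSop W *m RSop W).

Definition frob2 p q (A : 'M[C]_(p, q)) : C :=
  \sum_(a < p) \sum_(b < q) `|A a b| ^+ 2.

Definition dP (V W : sys) : C := sqrtC (\sum_(i < m) frob2 (V i - W i)).

Definition local_dP_min (v : 'I_m -> C) (V W : sys) : Prop :=
  exists2 eps : C, 0 < eps &
    forall V' W' : sys, inDRS v V' W' ->
      dP V V' + dP W W' < eps -> FP V W <= FP V' W'.

End Systems.

(* Main.v *)
Require Import Defs.
From HB Require Import structures.
From mathcomp Require Import all_boot all_order all_algebra.
Import Order.TTheory GRing.Theory Num.Theory.
Local Open Scope ring_scope.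
Set Implicit Arguments. Unset Strict Implicit.

From Stdlib Require Import FunctionalExtensionality.
Section H.
Variable C : numClosedFieldType.

Lemma adjmxM p q r (A : 'M[C]_(p,q)) (B : 'M[C]_(q,r)) :
  adjmx (A *m B) = adjmx B *m adjmx A.
Proof. by rewrite /adjmx map_mxM trmx_mul. Qed.

Lemma adjmxK p q (A : 'M[C]_(p,q)) : adjmx (adjmx A) = A.
Proof. by apply/matrixP => i j; rewrite !mxE conjCK. Qed.

Lemma adjmxD p q (A B : 'M[C]_(p,q)) : adjmx (A + B) = adjmx A + adjmx B.
Proof. by apply/matrixP => i j; rewrite !mxE rmorphD. Qed.

Lemma adjmxN p q (A : 'M[C]_(p,q)) : adjmx (- A) = - adjmx A.
Proof. by apply/matrixP => i j; rewrite !mxE rmorphN. Qed.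

Lemma adjmxB p q (A B : 'M[C]_(p,q)) : adjmx (A - B) = adjmx A - adjmx B.
Proof. by rewrite adjmxD adjmxN. Qed.

Lemma adjmxZ p q c (A : 'M[C]_(p,q)) : adjmx (c *: A) = c^* *: adjmx A.
Proof. by apply/matrixP => i j; rewrite !mxE rmorphM. Qed.

Lemma adjmx0 p q : adjmx (0 : 'M[C]_(p,q)) = 0.
Proof. by apply/matrixP => i j; rewrite !mxE rmorph0. Qed.

Lemma adjmx1 p : adjmx (1%:M : 'M[C]_p) = 1%:M.
Proof. apply/matrixP => i j; rewrite !mxE eq_sym; case: (i == j) => /=; [exact: conjC1 | exact: conjC0]. Qed.

Lemma adjmx_sum p q (I : finType) (F : I -> 'M[C]_(p,q)) :
  adjmx (\sum_i F i) = \sum_i adjmx (F i).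
Proof.
apply/matrixP => a b; rewrite !mxE !summxE rmorph_sum.
by apply: eq_bigr => i _; rewrite !mxE.
Qed.

Lemma tr_adj p q (A : 'M[C]_(p,q)) : \tr (A *m adjmx A) = frob2 A.
Proof.
rewrite /mxtrace /frob2; apply: eq_bigr => a _; rewrite mxE.
by apply: eq_bigr => b _; rewrite !mxE normCK.
Qed.

Lemma frob2_ge0 p q (A : 'M[C]_(p,q)) : 0 <= frob2 A.
Proof. by apply: sumr_ge0 => a _; apply: sumr_ge0 => b _; rewrite exprn_ge0. Qed.

Lemma frob2_eq0 p q (A : 'M[C]_(p,q)) : frob2 A = 0 -> A = 0.
Proof.
move=> h; apply/matrixP => a b; rewrite mxE.
have h1 := psumr_eq0P (fun a _ => sumr_ge0 _ (fun b _ => exprn_ge0 2 (normr_ge0 (A a b)))) h (isT : true).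
have h2 := psumr_eq0P (fun b _ => exprn_ge0 2 (normr_ge0 (A a b))) (h1 a) (isT : true).
by move/eqP: (h2 b); rewrite expf_eq0 /= normr_eq0 => /eqP.
Qed.

Lemma frob2Z p q c (A : 'M[C]_(p,q)) : frob2 (c *: A) = `|c| ^+ 2 * frob2 A.
Proof.
rewrite /frob2 mulr_sumr; apply: eq_bigr => a _; rewrite mulr_sumr.
by apply: eq_bigr => b _; rewrite mxE normrM exprMn.
Qed.

End H.
Section S.
Variables (C : numClosedFieldType) (m d : nat) (k : 'I_m -> nat).
Local Notation sys := (sys C d k).

Lemma frob2_sum_eq0 (I : finType) (p q : I -> nat) (F : forall i, 'M[C]_(p i,q i)) :
  \sum_i frob2 (F i) = 0 -> forall i, F i = 0.
Proof.
move=> h i; apply: frob2_eq0.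
exact: (psumr_eq0P (fun i _ => frob2_ge0 (F i)) h (isT : true)).
Qed.

Lemma RS_unit (X Y : sys) : \sum_i adjmx (X i) *m Y i = 1%:M -> RSop X \in unitmx.
Proof.
move=> hXY; rewrite unitmxE unitfE; apply/det0P => -[u u0 hu].
have h0 : \tr (u *m RSop X *m adjmx u) = 0 by rewrite hu mul0mx mxtrace0.
have e : u *m RSop X *m adjmx u = \sum_i (u *m adjmx (X i)) *m adjmx (u *m adjmx (X i)).
  rewrite /RSop mulmx_sumr mulmx_suml; apply: eq_bigr => i _.
  by rewrite adjmxM adjmxK !mulmxA.
rewrite e raddf_sum in h0.
have h1 : \sum_i frob2 (u *m adjmx (X i)) = 0.
  by apply: (etrans _ h0); apply: eq_bigr => i _; rewrite -tr_adj.
have h2 := frob2_sum_eq0 (p := fun _ => 1%N) (F := fun i => u *m adjmx (X i)) h1.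
move/eqP: u0; apply; rewrite -(mulmx1 u) -hXY mulmx_sumr.
by apply: big1 => i _; rewrite mulmxA h2 mul0mx.
Qed.

Lemma gram (X Y : sys) :
  \tr (RSop X *m RSop Y) = \sum_i \sum_j frob2 (Y j *m adjmx (X i)).
Proof.
rewrite /RSop mulmx_suml raddf_sum; apply: eq_bigr => i _.
rewrite mulmx_sumr raddf_sum; apply: eq_bigr => j _.
rewrite -tr_adj adjmxM adjmxK /= [LHS]mxtrace_mulC !mulmxA.
by rewrite -!mulmxA [LHS]mxtrace_mulC !mulmxA.
Qed.

Lemma gram_ge0 (X Y : sys) : 0 <= \tr (RSop X *m RSop Y).
Proof.
by rewrite gram; apply: sumr_ge0 => i _; apply: sumr_ge0 => j _; apply: frob2_ge0.
Qed.

Lemma gram_eq0 (X : sys) : \tr (RSop X *m RSop X) = 0 -> forall i, X i = 0.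
Proof.
rewrite gram => h i.
have hi := psumr_eq0P (fun i _ => sumr_ge0 _ (fun j _ => frob2_ge0 (X j *m adjmx (X i)))) h (isT : true).
have hii := frob2_sum_eq0 (hi i) i.
by apply: frob2_eq0; rewrite -tr_adj hii mxtrace0.
Qed.

End S.
Unset Implicit Arguments. Set Strict Implicit.
Theorem lemma6p2 (C : numClosedFieldType) (m d : nat) (k : 'I_m -> nat)
  (hm : (0 < m)%N) (hd : (0 < d)%N)
  (hk : forall i, (0 < k i)%N /\ (k i <= d)%N)
  (v : 'I_m -> C) (hv : forall i, 0 < v i)
  (V W : sys C d k) :
  inDRS v V W -> local_dP_min v V W ->
  W = candual V.
Proof.
move=> [hPV [hRSW hdual]] [eps heps hmin].
have hRSV : RSop V \in unitmx by case: hPV.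
set S := RSop V.
set Vs := candual V.
have hSP : S *m invmx S = 1%:M by rewrite mulmxV.
have hSadj : adjmx S = S.
  by rewrite /S /RSop adjmx_sum; apply: eq_bigr => i _; rewrite adjmxM adjmxK.
have hPadj : adjmx (invmx S) *m S = 1%:M.
  by rewrite -{2}hSadj -adjmxM hSP adjmx1.
have F3 : \sum_i adjmx (Vs i) *m V i = 1%:M.
  rewrite -hPadj /S /RSop mulmx_sumr; apply: eq_bigr => i _.
  by rewrite /Vs /candual adjmxM mulmxA.
pose Z : sys C d k := fun i => W i - Vs i.
have hZdef : forall i, Z i = W i - Vs i by [].
clearbody Z.
have F4 : \sum_i adjmx (Z i) *m V i = 0.
  apply: (@etrans _ _ (\sum_i adjmx (W i) *m V i - \sum_i adjmx (Vs i) *m V i)); last by rewrite hdual F3 subrr.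
  by rewrite -sumrB; apply: eq_bigr => i _; rewrite hZdef adjmxB mulmxBl.
have F4' : \sum_i adjmx (V i) *m Z i = 0.
  apply: (@etrans _ _ (adjmx (\sum_i adjmx (Z i) *m V i))); last by rewrite F4 adjmx0.
  by rewrite adjmx_sum; apply: eq_bigr => i _; rewrite adjmxM adjmxK.
have F5 : \sum_i adjmx (Vs i) *m Z i = 0.
  apply: (@etrans _ _ (adjmx (invmx S) *m \sum_i adjmx (V i) *m Z i)); last by rewrite F4' mulmx0.
  by rewrite mulmx_sumr; apply: eq_bigr => i _; rewrite /Vs /candual adjmxM mulmxA.
have F6 : \sum_i adjmx (Z i) *m Vs i = 0.
  apply: (@etrans _ _ ((\sum_i adjmx (Z i) *m V i) *m invmx S)); last by rewrite F4 mul0mx.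
  by rewrite mulmx_suml; apply: eq_bigr => i _; rewrite /Vs /candual mulmxA.
set Q := RSop Vs. set M := RSop Z.
have rsWt : forall (X : sys C d k) t, t^* = t -> (forall i, X i = Vs i + t *: Z i) ->
    RSop X = Q + (t * t) *: M.
  move=> X t ht hX.
  apply: (@etrans _ _ (\sum_i (adjmx (Vs i) *m Vs i + t *: (adjmx (Vs i) *m Z i)
       + t *: (adjmx (Z i) *m Vs i) + (t * t) *: (adjmx (Z i) *m Z i)))).
    apply: eq_bigr => i _.
    rewrite hX adjmxD adjmxZ ht mulmxDl !mulmxDr -!scalemxAl -!scalemxAr scalerA addrA.
    by [].
  by rewrite !big_split /= -!scaler_sumr F5 F6 !scaler0 !addr0.
have dWt : forall (X : sys C d k) t, t^* = t -> (forall i, X i = Vs i + t *: Z i) ->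
    \sum_i adjmx (X i) *m V i = 1%:M.
  move=> X t ht hX.
  apply: (@etrans _ _ (\sum_i (adjmx (Vs i) *m V i + t *: (adjmx (Z i) *m V i)))).
    by apply: eq_bigr => i _; rewrite hX adjmxD adjmxZ ht mulmxDl -scalemxAl.
  by rewrite big_split /= -scaler_sumr F3 F4 scaler0 addr0.
have trq : forall c, \tr ((Q + c *: M) *m (Q + c *: M)) =
    \tr (Q *m Q) + c * (\tr (Q *m M) + \tr (Q *m M)) + c * c * \tr (M *m M).
  move=> c.
  rewrite mulmxDl !mulmxDr -!scalemxAl -!scalemxAr scalerA !mxtraceD !mxtraceZ.
  rewrite [\tr (M *m Q)]mxtrace_mulC mulrDr !addrA.
  by [].
set a := \tr (Q *m M). set b := \tr (M *m M).
have ha : 0 <= a by apply: gram_ge0.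
have hb : 0 <= b by apply: gram_ge0.
have hW : forall i, W i = Vs i + 1 *: Z i by move=> i; rewrite scale1r hZdef addrC subrK.
have FPW : FP V W = \tr (S *m S) + (\tr (Q *m Q) + 1 * 1 * (a + a) + 1 * 1 * (1 * 1) * b).
  by rewrite /FP (rsWt W 1 (conjC1 _) hW) trq.
set N := \sum_i frob2 (Z i).
have hN : 0 <= N by apply: sumr_ge0 => i _; apply: frob2_ge0.
set R := sqrtC N.
have hR : 0 <= R by rewrite sqrtC_ge0.
have hRe : 0 < R + eps + eps by apply: addr_gt0 => //; apply: ltr_wpDl.
set s := eps / (R + eps + eps).
have hs0 : 0 < s by apply: divr_gt0.
have hs1 : s < 1 by rewrite ltr_pdivrMr // mul1r ltrDr; apply: ltr_wpDl.
set t := 1 - s.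
have ht0 : 0 < t by rewrite subr_gt0.
have ht1 : t < 1 by rewrite gtrBl.
have htc : t^* = t by apply: conj_Creal; apply: gtr0_real.
pose X : sys C d k := fun i => Vs i + t *: Z i.
have hX : forall i, X i = Vs i + t *: Z i by [].
have hDX : inDRS v V X.
  split => //; split; last exact: (dWt X t htc hX).
  exact: (RS_unit (dWt X t htc hX)).
have hdV : dP V V = 0.
  rewrite /dP big1 ?sqrtC0 // => i _.
  rewrite subrr /frob2 big1 // => a' _; rewrite big1 // => b' _.
  by rewrite mxE normr0 expr0n.
have hdW : dP W X = s * R.
  rewrite /dP (eq_bigr (fun i => s ^+ 2 * frob2 (Z i))); last first.
    move=> i _; rewrite hW hX.
    have -> : Vs i + 1 *: Z i - (Vs i + t *: Z i) = s *: Z i.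
      by rewrite opprD addrACA subrr add0r -scalerBl /t opprB addrC subrK.
    by rewrite frob2Z gtr0_norm.
  rewrite -mulr_sumr sqrtCM ?sqrCK // ?ltW //.
  by rewrite nnegrE exprn_ge0 // ltW.
have hlt : dP V V + dP W X < eps.
  by rewrite hdV add0r hdW /s mulrAC ltr_pdivrMr // ltr_pM2l // -addrA ltrDl; apply: addr_gt0.
have hle := hmin V X hDX hlt.
have FPX : FP V X = \tr (S *m S) + (\tr (Q *m Q) + (t * t) * (a + a) + (t * t) * (t * t) * b).
  by rewrite /FP (rsWt X t htc hX) trq.
set c := t * t.
have hc0 : 0 <= c by apply: mulr_ge0; apply: ltW.
have hc1 : c < 1 by apply: mulr_ilt1 => //; apply: ltW.
rewrite FPW FPX -!addrA !lerD2l !mul1r in hle.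
have hbb : b <= c * c * b.
  rewrite -(lerD2l (a + a)); apply: le_trans hle _; rewrite lerD2r.
  by apply: ler_piMl => //; [apply: addr_ge0 | apply: ltW].
have hb0 : b = 0.
  apply/eqP; rewrite eq_le hb andbT.
  have : (1 - c * c) * b <= 0 by rewrite mulrBl mul1r subr_le0.
  by rewrite pmulr_rle0 // subr_gt0; apply: mulr_ilt1.
have hZ0 := gram_eq0 hb0.
apply: functional_extensionality_dep => i.
by rewrite hW hZ0 scaler0 addr0.
Qed.
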